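(* Let $\rho$ be a state and $\phi$ a pure state not in $\mathcal F$ (of the output space). If there exists a probabilistic resource--non-generating transformation $\rho\to\tau$, where $\tau$ is a state with $F(\tau,\phi)\ge1-\varepsilon$, then $\varepsilon\ge\frac{1-F_{\mathcal F}(\phi)}{\Omega_{\mathcal F}(\rho)}\ge\frac{\lambda_{\min}(\rho)(1-F_{\mathcal F}(\phi))}{R_{\mathcal F}(\rho)}$, where $\lambda_{\min}(\rho)$ is the smallest eigenvalue of $\rho$.
   Context: Finite dimensions; $A\le B$ means $B-A\ge0$. Each space carries a closed convex set $\mathcal F$ of free density operators. $R_{\max}(X\|Y)=\inf\{\lambda:X\le\lambda Y\}$, conventions $\inf\emptyset=\infty$, $0^{-1}=\infty$, $\infty^{-1}=0$. $R_{\mathcal F}(\rho)=\min_{\sigma\in\mathcal F}R_{\max}(\rho\|\sigma)$; $\Omega_{\mathcal F}(\rho)=\inf_{\sigma\in\mathcal F}R_{\max}(\rho\|\sigma)R_{\max}(\sigma\|\rho)$; $F_{\mathcal F}(\phi)=\max_{\sigma\in\mathcal F}\langle\phi|\sigma|\phi\rangle$. Fidelity $F(\rho,\sigma)=\|\sqrt\rho\sqrt\sigma\|_1^2$. $\mathbb O$: completely positive trace-non-increasing maps $\mathcal E$ such that for every free input $\sigma$ there exist a free output $\sigma'$ and $p\in[0,1]$ with $\mathcal E(\sigma)=p\sigma'$. A probabilistic transformation $\rho\to\tau$ exists iff $\tau$ lies in the closure of $\{\mathcal E(\rho)/\mathrm{Tr}\,\mathcal E(\rho):\mathcal E\in\mathbb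 O,\ \mathrm{Tr}\,\mathcal E(\rho)>0\}$. *)

(* Defs.v *)
(* Complex numbers are R[i] (mathcomp-real-closed)
   over an arbitrary realType R, seen as a numClosedFieldType so that the
   (product) topology of MathComp-Analysis applies to complex matrices. *)
From HB Require Import structures.
From mathcomp Require Import all_boot all_order all_algebra.
From mathcomp Require Import complex.
From mathcomp Require Import all_classical all_reals all_analysis.

Set Implicit Arguments.
Unset Strict Implicit.
Unset Printing Implicit Defensive.

Import Order.TTheory GRing.Theory Num.Theory.
Import numFieldTopology.Exports.
Local Open Scope ring_scope.
Local Open Scope classical_set_scope.

Definition C (R : realType) : numClosedFieldType := R[i].

Section QRT.
Variable R : realType.
Local Notation C := (C R).

Definition toC (x : R) : C := (x%:C)%C.
Definition reC (z : C) : R := complex.Re z.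

Definition dag m n (A : 'M[C]_(m, n)) : 'M[C]_(n, m) := (map_mx Num.conj A)^T.

(* positive semidefiniteness of a kernel K on a finite index type:
   <v, K v> >= 0 for all v (in C; "0 <= z" means z is real and nonnegative) *)
Definition psdf (T : finType) (K : T -> T -> C) : Prop :=
  forall v : T -> C, 0 <= \sum_(x : T) \sum_(y : T) (v x)^* * K x y * v y.

Definition psd n (A : 'M[C]_n) : Prop := psdf (fun i j => A i j).

Definition lemx n (A B : 'M[C]_n) : Prop := psd (B - A).

Definition density n (A : 'M[C]_n) : Prop := psd A /\ \tr A = 1.

Definition unit_vec m (phi : 'cV[C]_m) : Prop := dag phi *m phi = 1%:M.
Definition pure_proj m (phi : 'cV[C]_m) : 'M[C]_m := phi *m dag phi.

Definition convex_set n (F : set 'M[C]_n) : Prop :=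
  forall x y, F x -> F y -> forall t : R, 0 <= t <= 1 ->
    F (toC t *: x + toC (1 - t) *: y).

Definition free_set n (F : set 'M[C]_n) : Prop :=
  closed F /\ convex_set F /\ (forall s, F s -> density s).

(* R_max(X||Y) = inf {lambda : X <= lambda Y}, inf of the empty set = +oo *)
Definition Rmax n (X Y : 'M[C]_n) : \bar R :=
  ereal_inf [set l%:E | l in [set l : R | lemx X (toC l *: Y)]].

Definition RF n (F : set 'M[C]_n) (rho : 'M[C]_n) : \bar R :=
  ereal_inf [set Rmax rho s | s in F].

Definition OmegaF n (F : set 'M[C]_n) (rho : 'M[C]_n) : \bar R :=
  ereal_inf [set (Rmax rho s * Rmax s rho)%E | s in F].

Definition FF m (F : set 'M[C]_m) (phi : 'cV[C]_m) : \bar R :=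
  ereal_sup [set (reC ((dag phi *m s *m phi) 0 0))%:E | s in F].

(* reciprocals on extended reals use MathComp-Analysis' inve (x^-1 in ereal_scope),
   which satisfies 0^-1 = +oo and +oo^-1 = 0 *)

Definition msqrt n (A : 'M[C]_n) : 'M[C]_n :=
  xget 0 [set B | psd B /\ B *m B = A].

Definition trnorm n (A : 'M[C]_n) : R := reC (\tr (msqrt (dag A *m A))).

Definition fidelity n (rho sigma : 'M[C]_n) : R :=
  trnorm (msqrt rho *m msqrt sigma) ^+ 2.

Definition lmin n (A : 'M[C]_n) : R := inf [set x : R | eigenvalue A (toC x)].

(* complete positivity: id_k (x) E is positive for every ancilla dimension k *)
Definition cp n m (E : 'M[C]_n -> 'M[C]_m) : Prop :=
  forall (k : nat) (X : 'I_k * 'I_n -> 'I_k * 'I_n -> C),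
    psdf X ->
    psdf (fun p q : 'I_k * 'I_m =>
            E (\matrix_(i, j) X (p.1, i) (q.1, j)) p.2 q.2).

Definition tni n m (E : 'M[C]_n -> 'M[C]_m) : Prop :=
  forall X, psd X -> \tr (E X) <= \tr X.

Definition RNG n m (Fin : set 'M[C]_n) (Fout : set 'M[C]_m)
    (E : {linear 'M[C]_n -> 'M[C]_m}) : Prop :=
  cp E /\ tni E /\
  forall s, Fin s -> exists s' (p : R), Fout s' /\ 0 <= p <= 1 /\ E s = toC p *: s'.

Definition prob_trans n m (Fin : set 'M[C]_n) (Fout : set 'M[C]_m)
    (rho : 'M[C]_n) (tau : 'M[C]_m) : Prop :=
  closure [set (\tr (E rho))^-1 *: E rho |
            E in [set E : {linear 'M[C]_n -> 'M[C]_m} |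
                   RNG Fin Fout E /\ 0 < \tr (E rho)]] tau.

End QRT.

(* Main.v *)
Require Import Defs.
From HB Require Import structures.
From mathcomp Require Import all_boot all_order all_algebra.
From mathcomp Require Import complex.
From mathcomp Require Import all_classical all_reals all_analysis.
From mathcomp Require Import ring lra.
Import Order.TTheory GRing.Theory Num.Theory.
Import numFieldTopology.Exports.
Local Open Scope ring_scope.
Local Open Scope classical_set_scope.
Set Implicit Arguments. Unset Strict Implicit. Unset Printing Implicit Defensive.

Section S.
Variable R : realType.
Local Notation C := (C R).

Lemma dagE m n (A : 'M[C]_(m, n)) i j : dag A i j = (A j i)^*.
Proof. by rewrite /dag !mxE. Qed.

Lemma dagK m n (A : 'M[C]_(m, n)) : dag (dag A) = A.
Proof. by apply/matrixP => i j; rewrite !dagE conjCK. Qed.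

Lemma dagM m n p (A : 'M[C]_(m, n)) (B : 'M[C]_(n, p)) :
  dag (A *m B) = dag B *m dag A.
Proof.
apply/matrixP => i j; rewrite dagE !mxE rmorph_sum; apply: eq_bigr => k _.
by rewrite !dagE rmorphM mulrC.
Qed.

Lemma dagD m n (A B : 'M[C]_(m, n)) : dag (A + B) = dag A + dag B.
Proof. by apply/matrixP => i j; rewrite dagE [RHS]mxE !dagE mxE rmorphD. Qed.

Lemma dagN m n (A : 'M[C]_(m, n)) : dag (- A) = - dag A.
Proof. by apply/matrixP => i j; rewrite dagE [RHS]mxE !dagE mxE rmorphN. Qed.

Lemma dagB m n (A B : 'M[C]_(m, n)) : dag (A - B) = dag A - dag B.
Proof. by rewrite dagD dagN. Qed.

Lemma dagZ m n a (A : 'M[C]_(m, n)) : dag (a *: A) = a^* *: dag A.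
Proof. by apply/matrixP => i j; rewrite dagE [RHS]mxE !dagE mxE rmorphM. Qed.

Lemma dag1 n : dag (1%:M : 'M[C]_n) = 1%:M.
Proof.
by apply/matrixP => i j; rewrite dagE !mxE eq_sym rmorph_nat.
Qed.

Definition qf n (A : 'M[C]_n) (v : 'cV[C]_n) := (dag v *m A *m v) 0 0.

Lemma qf_sum n (A : 'M[C]_n) v :
  qf A v = \sum_x \sum_y (v x 0)^* * A x y * v y 0.
Proof.
rewrite /qf mxE exchange_big /=; apply: eq_bigr => y _.
rewrite mxE mulr_suml; apply: eq_bigr => x _.
by rewrite dagE.
Qed.

Lemma psdE n (A : 'M[C]_n) : psd A <-> forall v, 0 <= qf A v.
Proof.
split => [H v|H w].
  by rewrite qf_sum; apply: (H (fun x => v x 0)).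
have := H (\col_i w i); rewrite qf_sum.
by under eq_bigr do under eq_bigr do rewrite !mxE.
Qed.

End S.

Section S2.
Variable R : realType.
Local Notation C := (C R).

Definition bf n (A : 'M[C]_n) (u v : 'cV[C]_n) := (dag u *m A *m v) 0 0.

Lemma bf_e n (A : 'M[C]_n) i j : bf A (delta_mx i 0) (delta_mx j 0) = A i j.
Proof.
rewrite /bf; have -> : dag (delta_mx i 0 : 'cV[C]_n) = delta_mx 0 i.
  by apply/matrixP => a b; rewrite dagE !mxE rmorph_nat andbC.
by rewrite -rowE -colE !mxE.
Qed.

Lemma bfDl n (A : 'M[C]_n) u1 u2 v : bf A (u1 + u2) v = bf A u1 v + bf A u2 v.
Proof. by rewrite /bf dagD !mulmxDl [LHS]mxE. Qed.

Lemma bfDr n (A : 'M[C]_n) u v1 v2 : bf A u (v1 + v2) = bf A u v1 + bf A u v2.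
Proof. by rewrite /bf !mulmxDr [LHS]mxE. Qed.

Lemma bfZl n (A : 'M[C]_n) c u v : bf A (c *: u) v = c^* * bf A u v.
Proof. by rewrite /bf dagZ -!scalemxAl [LHS]mxE. Qed.

Lemma bfZr n (A : 'M[C]_n) c u v : bf A u (c *: v) = c * bf A u v.
Proof. by rewrite /bf -!scalemxAr [LHS]mxE. Qed.

Lemma cjD (x y : C) : (x + y)^* = x^* + y^*. Proof. exact: rmorphD. Qed.
Lemma cjM (x y : C) : (x * y)^* = x^* * y^*. Proof. exact: rmorphM. Qed.
Lemma cjN (x : C) : (- x)^* = - x^*. Proof. exact: rmorphN. Qed.

Lemma qfE n (A : 'M[C]_n) v : qf A v = bf A v v. Proof. by []. Qed.

Lemma qf_expand n (A : 'M[C]_n) u v c :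
  qf A (u + c *: v) = qf A u + c * bf A u v + c^* * bf A v u + c^* * c * qf A v.
Proof.
rewrite !qfE bfDl !bfDr !bfZl !bfZr !addrA mulrA; congr (_ + _); exact: addrAC.
Qed.

Lemma psd_herm n (A : 'M[C]_n) : psd A -> dag A = A.
Proof.
move/psdE => H; apply/matrixP => i j; rewrite dagE.
have rl v : (qf A v)^* = qf A v by apply/conj_Creal/ger0_real/H.
have Hii k : (A k k)^* = A k k by rewrite -bf_e; apply: rl.
have h1 := rl (delta_mx j 0 + 1 *: delta_mx i 0).
have h2 := rl (delta_mx j 0 + 'i *: delta_mx i 0).
rewrite qf_expand in h1; rewrite qf_expand in h2; rewrite !qfE !bf_e in h1 h2.
rewrite !cjD !cjM ?conjCK !Hii !conjC1 ?conjCi ?cjN ?conjCi ?opprK in h1 h2.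
set u := A j i in h1 h2 *; set w := A i j in h1 h2 *.
move: h1 h2; set p := A j j; set q := A i i; set I := 'i => h1 h2.
have hI : I * I = -1 by rewrite -expr2 sqrCi.
move: h1 h2 hI; clearbody u w p q I => h1 h2 hI.
apply/eqP; rewrite -subr_eq0; apply/eqP.
have h2n : (2 : C) != 0 by rewrite pnatr_eq0.
apply: (mulfI h2n); rewrite mulr0.
have -> : 2 * (u^* - w) = ((p + 1 * u^* + 1 * w^* + 1 * 1 * q) - (p + 1 * u + 1 * w + 1 * 1 * q))
   + I * ((p + - I * u^* + I * w^* + I * - I * q) - (p + I * u + - I * w + - I * I * q))
   - (I * I + 1) * (w^* - u^* - u + w) by ring.
by rewrite h1 h2 hI !subrr; ring.
Qed.

End S2.

Section S3.
Variable R : realType.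
Local Notation C := (C R).

Lemma qfD n (A B : 'M[C]_n) v : qf (A + B) v = qf A v + qf B v.
Proof. by rewrite /qf mulmxDr mulmxDl [LHS]mxE. Qed.

Lemma qfZ n a (A : 'M[C]_n) v : qf (a *: A) v = a * qf A v.
Proof. by rewrite /qf -scalemxAr -scalemxAl [LHS]mxE. Qed.

Lemma qfN n (A : 'M[C]_n) v : qf (- A) v = - qf A v.
Proof. by rewrite -scaleN1r qfZ mulN1r. Qed.

Lemma qfB n (A B : 'M[C]_n) v : qf (A - B) v = qf A v - qf B v.
Proof. by rewrite qfD qfN. Qed.

Lemma psdD n (A B : 'M[C]_n) : psd A -> psd B -> psd (A + B).
Proof.
move=> /psdE hA /psdE hB; apply/psdE => v; rewrite qfD; exact: addr_ge0.
Qed.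

Lemma psdZ n a (A : 'M[C]_n) : 0 <= a -> psd A -> psd (a *: A).
Proof.
move=> ha /psdE hA; apply/psdE => v; rewrite qfZ; exact: mulr_ge0.
Qed.

Lemma psd_congr n k (A : 'M[C]_n) (B : 'M[C]_(n, k)) : psd A -> psd (dag B *m A *m B).
Proof.
move=> /psdE hA; apply/psdE => v; have := hA (B *m v).
by rewrite /qf dagM !mulmxA.
Qed.

Lemma normsq_ge0 k (w : 'cV[C]_k) : 0 <= (dag w *m w) 0 0.
Proof.
rewrite mxE; apply: sumr_ge0 => i _; rewrite dagE mulrC; exact: mul_conjC_ge0.
Qed.

Lemma dagYY0 k l (Y : 'M[C]_(k, l)) : dag Y *m Y = 0 -> Y = 0.
Proof.
move=> h; apply/matrixP => i j; rewrite [RHS]mxE.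
have := congr1 (fun M : 'M[C]_l => M j j) h; rewrite [LHS]mxE [RHS]mxE.
move/eqP; rewrite psumr_eq0; last by move=> x _; rewrite dagE mulrC mul_conjC_ge0.
move/allP/(_ i (mem_index_enum _)); rewrite implyTb dagE mulrC mul_conjC_eq0.
by move/eqP.
Qed.

Lemma tr_psd n (A : 'M[C]_n) : psd A -> 0 <= \tr A.
Proof.
move/psdE => h; rewrite /mxtrace; apply: sumr_ge0 => i _.
by rewrite -bf_e; exact: h.
Qed.

Lemma psd0 n : psd (0 : 'M[C]_n).
Proof. by apply/psdE => v; rewrite /qf mulmx0 mul0mx mxE. Qed.

End S3.

Section S4.
Variable R : realType.
Local Notation C := (C R).
Variable m : nat.
Variable phi : 'cV[C]_m.
Hypothesis uphi : unit_vec phi.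
Local Notation P := (pure_proj phi).

Lemma P2 : P *m P = P.
Proof.
rewrite /pure_proj mulmxA -(mulmxA phi) uphi mulmx1; done.
Qed.

Lemma dagP : dag P = P.
Proof. by rewrite /pure_proj dagM dagK. Qed.

Lemma psd1 k : psd (1%:M : 'M[C]_k).
Proof. by apply/psdE => v; rewrite /qf mulmx1 normsq_ge0. Qed.

Lemma psdP : psd P.
Proof.
have := psd_congr (dag phi) (@psd1 1); rewrite dagK mulmx1; done.
Qed.

Lemma trP : \tr P = 1.
Proof. by rewrite /pure_proj mxtrace_mulC uphi mxtrace1. Qed.

Lemma PXP (X : 'M[C]_m) : P *m X *m P = qf X phi *: P.
Proof.
rewrite /pure_proj /qf.
have -> : phi *m dag phi *m X *m (phi *m dag phi) = phi *m (dag phi *m X *m phi) *m dag phi.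
  by rewrite !mulmxA.
by rewrite [in LHS](mx11_scalar (dag phi *m X *m phi)) mul_mx_scalar -scalemxAl.
Qed.

Lemma qfP : qf P phi = 1.
Proof.
by rewrite /qf /pure_proj !mulmxA uphi mul1mx uphi mxE.
Qed.

Lemma tr_qf (X : 'M[C]_m) : \tr (X *m P) = qf X phi.
Proof.
by rewrite /pure_proj mulmxA mxtrace_mulC mulmxA /mxtrace big_ord1.
Qed.

Lemma qf_le_tr (M : 'M[C]_m) : psd M -> qf M phi <= \tr M.
Proof.
move=> hM; set Q := 1%:M - P.
have hQ : dag Q = Q by rewrite /Q dagB dag1 dagP.
have QQ : Q *m Q = Q.
  by rewrite /Q mulmxBl mul1mx mulmxBr mulmx1 P2 subrr subr0.
have := tr_psd (psd_congr Q hM); rewrite hQ mxtrace_mulC mulmxA QQ.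
by rewrite /Q mulmxBl mul1mx raddfB /= mxtrace_mulC tr_qf subr_ge0.
Qed.

Lemma msqrt_unique (X : 'M[C]_m) c : psd X -> X *m X = c *: P -> 0 <= c ->
  X = sqrtC c *: P.
Proof.
move=> hX XX hc; have hXd := psd_herm hX.
set Q := 1%:M - P.
have hQ : dag Q = Q by rewrite /Q dagB dag1 dagP.
have QP : Q *m P = 0 by rewrite /Q mulmxBl mul1mx P2 subrr.
have PQ : P *m Q = 0 by rewrite /Q mulmxBr mulmx1 P2 subrr.
have XQ : X *m Q = 0.
  apply: dagYY0; rewrite dagM hQ hXd mulmxA -(mulmxA Q) XX -scalemxAr -scalemxAl.
  by rewrite QP mul0mx scaler0.
have XP : X = X *m P.
  by apply/eqP; rewrite -subr_eq0 -{1}(mulmx1 X) -mulmxBr XQ.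
have PX : X = P *m X by rewrite -[LHS]hXd [in LHS]XP dagM dagP hXd.
have Xx : X = qf X phi *: P by rewrite -PXP -PX -XP.
have x0 : 0 <= qf X phi by move/psdE: hX; apply.
have : qf (X *m X) phi = qf (c *: P) phi by rewrite XX.
rewrite qfZ qfP mulr1 {1 2}Xx -scalemxAl -scalemxAr P2 scalerA qfZ qfP mulr1.
by move=> <-; rewrite -expr2 sqrCK.
Qed.

Lemma msqrt_rank1 c : 0 <= c -> msqrt (c *: P) = sqrtC c *: P.
Proof.
move=> hc; apply: xget_unique.
  split; first by apply: psdZ; rewrite ?sqrtC_ge0 //; exact: psdP.
  by rewrite -scalemxAl -scalemxAr P2 scalerA -expr2 sqrtCK.
by move=> y [hy yy]; apply: msqrt_unique.
Qed.

End S4.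

Section S5.
Variable R : realType.
Local Notation C := (C R).

Lemma reC_le (x y : C) : x <= y -> reC x <= reC y.
Proof. by rewrite lecE => /andP[]. Qed.

Lemma reC_lt (x y : C) : x < y -> reC x < reC y.
Proof. by rewrite ltcE => /andP[]. Qed.

Lemma Im_ge0 (x : C) : 0 <= x -> complex.Im x = 0.
Proof. exact: ger0_Im. Qed.

Lemma reC_sqr (z : C) : complex.Im z = 0 -> reC (z ^+ 2) = reC z ^+ 2.
Proof. by case: z => a b /= ->; rewrite /reC !expr2 /= mulr0 subr0. Qed.

Lemma fid_le m (tau : 'M[C]_m) phi : unit_vec phi -> psd tau ->
  fidelity tau (pure_proj phi) <= reC (qf tau phi).
Proof.
move=> uphi htau.
have mP : msqrt (pure_proj phi) = pure_proj phi.
  by rewrite -{1}(scale1r (pure_proj phi)) msqrt_rank1 // sqrtC1 scale1r.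
rewrite /fidelity /trnorm mP.
set S := msqrt tau.
have e1 : dag (S *m pure_proj phi) *m (S *m pure_proj phi) = qf (dag S *m S) phi *: pure_proj phi.
  by rewrite dagM dagP (mulmxA (pure_proj phi *m dag S) S (pure_proj phi)) -(mulmxA (pure_proj phi) (dag S) S) PXP.
have c0 : 0 <= qf (dag S *m S) phi.
  have -> : qf (dag S *m S) phi = (dag (S *m phi) *m (S *m phi)) 0 0.
    by rewrite /qf dagM !mulmxA.
  exact: normsq_ge0.
rewrite e1 msqrt_rank1 // mxtraceZ trP // mulr1 -reC_sqr; last first.
  by apply: Im_ge0; rewrite sqrtC_ge0.
rewrite sqrtCK; apply: reC_le.
rewrite /S /msqrt; case: xgetP => [y _ [hy yy]|_].
  by rewrite psd_herm // yy.
by rewrite mulmx0 /qf mulmx0 mul0mx mxE; move/psdE: htau; apply.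
Qed.

End S5.

Section S6.
Variable R : realType.
Local Notation C := (C R).

Lemma sum_pair1 (T : finType) (G : 'I_1 * T -> C) :
  \sum_p G p = \sum_i G (ord0, i).
Proof.
rewrite (eq_bigr (fun p => G (p.1, p.2))); last by case.
by rewrite -(pair_big xpredT xpredT (fun a i => G (a, i))) big_ord1.
Qed.

Lemma cp_psd n m (E : 'M[C]_n -> 'M[C]_m) (A : 'M[C]_n) : cp E -> psd A -> psd (E A).
Proof.
move=> hE hA.
have h1 : psdf (fun p q : 'I_1 * 'I_n => A p.2 q.2).
  move=> v; rewrite sum_pair1.
  under eq_bigr do rewrite sum_pair1.
  exact: (hA (fun i => v (ord0, i))).
move=> w; have := hE 1 _ h1 (fun p => w p.2).
have eA : \matrix_(i, j) A i j = A by apply/matrixP => i j; rewrite mxE.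
have e (F : 'I_1 * 'I_m -> 'I_1 * 'I_m -> C) :
   \sum_x \sum_y F x y = \sum_i \sum_j F (ord0, i) (ord0, j).
  by rewrite sum_pair1; apply: eq_bigr => i _; exact: sum_pair1.
move=> H; by rewrite e /= eA in H.
Qed.

End S6.

Section S7.
Variable R : realType.
Local Notation C := (C R).

Lemma reCD (x y : C) : reC (x + y) = reC x + reC y. Proof. by case: x; case: y. Qed.
Lemma reCN (x : C) : reC (- x) = - reC x. Proof. by case: x. Qed.
Lemma reCB (x y : C) : reC (x - y) = reC x - reC y. Proof. by rewrite reCD reCN. Qed.
Lemma reCM_toC r (x : C) : reC (toC r * x) = r * reC x.
Proof. by case: x => u v; rewrite /reC /toC /= mul0r subr0. Qed.
Lemma reC_toC (r : R) : reC (toC r) = r. Proof. by []. Qed.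
Lemma reC1 : reC (1 : C) = 1 :> R. Proof. by []. Qed.
Lemma toC_reC (z : C) : complex.Im z = 0 -> z = toC (reC z).
Proof. by case: z => u v /= ->. Qed.
Lemma toCV r : (toC r)^-1 = toC r^-1 :> C.
Proof. by rewrite /toC fmorphV. Qed.
Lemma toCM r s : toC (r * s) = toC r * toC s :> C.
Proof. by rewrite /toC rmorphM. Qed.
Lemma toC_ge0 r : (0 <= toC r :> C) = (0 <= r).
Proof. by rewrite /toC lecR. Qed.

Lemma mxtraceB k (A B : 'M[C]_k) : \tr (A - B) = \tr A - \tr B.
Proof. exact: raddfB. Qed.

Lemma core_ineq n m (Fin : set 'M[C]_n) (Fout : set 'M[C]_m)
  (rho s : 'M[C]_n) (phi : 'cV[C]_m) (a b : R)
  (E : {linear 'M[C]_n -> 'M[C]_m}) :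
  free_set Fout -> unit_vec phi -> Fin s ->
  lemx rho (toC a *: s) -> lemx s (toC b *: rho) ->
  RNG Fin Fout E -> 0 < \tr (E rho) ->
  exists s', Fout s' /\
    1 - reC (qf s' phi) <= a * b * (1 - reC (qf ((\tr (E rho))^-1 *: E rho) phi)).
Proof.
move=> [_ [_ FoutD]] uphi Fs hra hsb [cpE [_ rngE]] t0.
have [s' [p [Fs' [/andP[p0 p1] Es]]]] := rngE s Fs.
exists s'; split => //.
have [hs' trs'] := FoutD s' Fs'.
set t := \tr (E rho) in t0 *.
have Imt : complex.Im t = 0 by apply: Im_ge0; exact: ltW.
have tE := toC_reC Imt.
set tr := reC t in tE.
have tr0 : 0 < tr by rewrite /tr; have := reC_lt t0.
have h1 : tr <= a * p.
  have := tr_psd (cp_psd cpE hra).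
  rewrite linearB linearZ /= Es mxtraceB !mxtraceZ trs' mulr1 -/t.
  move/reC_le; rewrite reCB reCM_toC reC_toC /= -/tr; lra.
have h2 : b * reC (qf (E rho) phi) - p * reC (qf s' phi) <= b * tr - p.
  have := qf_le_tr uphi (cp_psd cpE hsb).
  rewrite linearB linearZ /= Es qfB !qfZ mxtraceB !mxtraceZ trs' mulr1 -/t.
  move/reC_le; rewrite !reCB !reCM_toC /= -/tr; lra.
have h3 : reC (qf s' phi) <= 1.
  by have := reC_le (qf_le_tr uphi hs'); rewrite trs'.
have -> : reC (qf (t^-1 *: E rho) phi) = tr^-1 * reC (qf (E rho) phi).
  by rewrite qfZ tE toCV reCM_toC.
set X := reC (qf s' phi) in h2 h3 *; set Y := reC (qf (E rho) phi) in h2 *.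
have a0 : 0 < a.
  rewrite ltNge; apply/negP => a0.
  have : a * p <= 0 by rewrite mulr_le0_ge0.
  lra.
have h4 : tr * (1 - X) <= a * p * (1 - X) by apply: ler_wpM2r; lra.
have h5 : a * p * (1 - X) <= a * (b * (tr - Y)) by rewrite -mulrA; apply: ler_wpM2l; lra.
have e : a * b * (1 - tr^-1 * Y) = tr^-1 * (a * (b * (tr - Y))).
  by field; lra.
rewrite e ler_pdivlMl //; lra.
Qed.

End S7.

Section S8.
Variable R : realType.
Local Notation C := (C R).

Lemma ball_entry m (x y : 'M[C]_m) (e : C) : ball x e y -> forall i j, `|x i j - y i j| < e.
Proof. by move=> [_ h] i j; have := h i j. Qed.

Lemma qf_norm_le m (D : 'M[C]_m) phi (e : C) :
  (forall i j, `|D i j| < e) ->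
  `|qf D phi| <= e * \sum_x \sum_y `|phi x 0| * `|phi y 0|.
Proof.
move=> hD; rewrite qf_sum mulr_sumr.
apply: le_trans (ler_norm_sum _ _ _) _; apply: ler_sum => x _.
rewrite mulr_sumr; apply: le_trans (ler_norm_sum _ _ _) _; apply: ler_sum => y _.
rewrite !normrM norm_conjC.
have := ltW (hD x y) => h.
rewrite mulrAC mulrC; apply: ler_wpM2r => //.
Qed.

Lemma closure_le m (A : set 'M[C]_m) phi (tau : 'M[C]_m) (beta : R) :
  (forall y, A y -> reC (qf y phi) <= beta) -> closure A tau ->
  reC (qf tau phi) <= beta.
Proof.
move=> hA cl; rewrite leNgt; apply/negP => hlt.
set N := \sum_x \sum_y `|phi x 0| * `|phi y 0|.
have N0 : 0 <= N by apply: sumr_ge0 => x _; apply: sumr_ge0 => y _; apply: mulr_ge0.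
have rN0 : 0 <= reC N by have := reC_le N0.
set d := reC (qf tau phi) - beta.
have d0 : 0 < d by rewrite /d subr_gt0.
set e := toC (d / (reC N + 1)).
have e0 : 0 < e by rewrite /e /toC ltcR divr_gt0 //; lra.
have [y [Ay By]] := cl _ (nbhsx_ballx tau e e0).
have hD : forall i j, `|(tau - y) i j| < e.
  by move=> i j; rewrite !mxE; apply: ball_entry.
have hN := qf_norm_le phi hD.
rewrite -/N in hN; have h1 := reC_le hN; rewrite reCM_toC in h1.
have h2 := reC_le (normc_ge_Re (qf (tau - y) phi)).
have h5 : reC ((`|complex.Re (qf (tau - y) phi)|)%:C)%C = `|complex.Re (qf (tau - y) phi)| by [].
rewrite h5 in h2.
have h3 : reC (qf (tau - y) phi) <= `|complex.Re (qf (tau - y) phi)| := ler_norm _.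
have h4 := hA y Ay.
set z := `|complex.Re (qf (tau - y) phi)| in h2 h3.
rewrite qfB reCB in h3.
have h6 : d / (reC N + 1) * reC N < d.
  rewrite mulrAC ltr_pdivrMr; last by lra.
  nra.
rewrite /d in h6 h1.
set q := reC (qf y phi) in h3 h4.
set w := reC (`|qf (tau - y) phi|) in h1 h2.
lra.
Qed.
End S8.

Section S9.
Variable R : realType.
Local Notation C := (C R).

Lemma qf_scale n (A : 'M[C]_n) c v : qf A (c *: v) = c^* * c * qf A v.
Proof. by rewrite !qfE bfZl bfZr mulrA. Qed.

Lemma eig_psd n (A : 'M[C]_n) a : psd A -> eigenvalue A a -> 0 <= a.
Proof.
move=> hA /eigenvalueP [v va v0].
have hq : qf A (dag v) = a * (v *m dag v) 0 0.
  by rewrite /qf dagK va -scalemxAl mxE.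
have n0 : 0 < (v *m dag v) 0 0.
  have -> : (v *m dag v) 0 0 = (dag (dag v) *m dag v) 0 0 by rewrite dagK.
  rewrite lt_def normsq_ge0 andbT; apply/eqP => h.
  have : dag (dag v) *m dag v = 0.
    by apply/matrixP => i j; rewrite !ord1 h mxE.
  move/dagYY0 => h2; move/eqP: v0; apply.
  by rewrite -(dagK v) h2; apply/matrixP => i j; rewrite dagE !mxE conjC0.
have := (psdE A).1 hA (dag v); rewrite hq => h.
by rewrite -(mulfK (lt0r_neq0 n0) a) divr_ge0 // ltW.
Qed.

Lemma psd_diag n (d : 'rV[C]_n) : (forall i, 0 <= d 0 i) -> psd (diag_mx d).
Proof.
move=> hd; apply/psdE => v; rewrite qf_sum; apply: sumr_ge0 => x _.
rewrite (bigD1 x) //= big1 ?addr0; last first.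
  by move=> y /negbTE hy; rewrite mxE eq_sym hy mulr0n mulr0 mul0r.
rewrite mxE eqxx mulr1n mulrAC; apply: mulr_ge0 => //.
by rewrite mulrC mul_conjC_ge0.
Qed.

Lemma tstar_dag m n (M : 'M[C]_(m, n)) : map_mx Num.conj (M^T) = dag M.
Proof. by rewrite /dag map_trmx. Qed.

Lemma lmin_psd n (rho : 'M[C]_n) : psd rho ->
  psd (rho - toC (lmin rho) *: 1%:M).
Proof.
move=> hr; have hd := psd_herm hr.
have nrm : rho \is normalmx by apply/eqP; rewrite tstar_dag hd.
set P := spectralmx rho; set D := spectral_diag rho.
have rE : rho = invmx P *m diag_mx D *m P by apply/orthomx_spectralP.
have Pu : P \in unitmx := spectral_unit rho.
have iP : invmx P = dag P by rewrite invmx_unitary ?spectral_unitarymx // tstar_dag.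
have eigD i : eigenvalue rho (D 0 i).
  apply/eigenvalueP; exists (delta_mx 0 i *m P).
    rewrite [in LHS]rE !mulmxA mulmxK // -[delta_mx 0 i *m diag_mx D]rowE row_diag_mx -scalemxAl //.
  apply/negP => /eqP h.
  have := congr1 (mulmx^~ (invmx P)) h; rewrite /= mulmxK // mul0mx.
  move=> /matrixP /(_ 0 i); rewrite !mxE !eqxx /=.
  by move/eqP; rewrite oner_eq0.
have D0 i : 0 <= D 0 i by apply: eig_psd hr (eigD i).
have lb : has_lbound [set x : R | eigenvalue rho (toC x)].
  by exists 0 => x /eig_psd -/(_ hr); rewrite toC_ge0.
have Dl i : toC (lmin rho) <= D 0 i.
  rewrite (toC_reC (Im_ge0 (D0 i))) /toC lecR.
  apply: (ge_inf lb); rewrite /= -(toC_reC (Im_ge0 (D0 i))); exact: eigD.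
set c := toC (lmin rho) in Dl *.
have -> : rho - c *: 1%:M = dag P *m (diag_mx (\row_i (D 0 i - c))) *m P.
  have -> : diag_mx (\row_i (D 0 i - c)) = diag_mx D - c *: 1%:M.
    by apply/matrixP => i j; rewrite !mxE; case: (i == j); rewrite ?mulr1n ?mulr0n ?mulr1 ?mulr0 ?subrr.
  by rewrite mulmxBr mulmxBl -scalemxAr -scalemxAl mulmx1 -iP mulVmx // -rE.
apply: psd_congr; apply: psd_diag => i; rewrite mxE subr_ge0; exact: Dl.
Qed.

End S9.

Section S10.
Variable R : realType.
Local Notation C := (C R).

Lemma dens_le1 n (s : 'M[C]_n) : density s -> psd (1%:M - s).
Proof.
move=> [hs trs]; apply/psdE => v; rewrite qfB.
set N := qf 1%:M v.
have N0 : 0 <= N by rewrite /N /qf mulmx1 normsq_ge0.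
have [Nz|Nnz] := eqVneq N 0.
  have v0 : v = 0.
    apply: dagYY0; apply/matrixP => i j; rewrite !ord1 [RHS]mxE.
    by move: Nz; rewrite /N /qf mulmx1.
  have q0 (A : 'M[C]_n) : qf A 0 = 0 by rewrite /qf mulmx0 mxE.
  by rewrite /N v0 !q0 subrr.
have Np : 0 < N by rewrite lt_def Nnz.
set r := sqrtC N.
have rp : 0 < r by rewrite sqrtC_gt0.
have rc : (r^-1)^* = r^-1 by apply: geC0_conj; rewrite invr_ge0 ltW.
have r2 : r ^+ 2 = N by rewrite sqrtCK.
have u : unit_vec (r^-1 *: v).
  have eN : (dag v *m v) 0 0 = N by rewrite /N /qf mulmx1.
  apply/matrixP => i j; rewrite !ord1 [RHS]mxE eqxx /=.
  rewrite dagZ -scalemxAl -scalemxAr scalerA [LHS]mxE rc eN -r2 expr2.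
  have r0 : r != 0 by rewrite lt0r_neq0.
  by field.
have := qf_le_tr u hs; rewrite trs qf_scale rc.
have -> : r^-1 * r^-1 = N^-1 by rewrite -r2 expr2 invfM.
by rewrite ler_pdivrMl // mulr1 subr_ge0.
Qed.

Lemma lemx_ge1 n (X Y : 'M[C]_n) l : density X -> density Y ->
  lemx X (toC l *: Y) -> 1 <= l.
Proof.
move=> [_ tX] [_ tY] /tr_psd; rewrite mxtraceB mxtraceZ tX tY mulr1 subr_ge0.
by rewrite -(reC_toC l); move/reC_le.
Qed.

End S10.

Section S11.
Local Open Scope ereal_scope.
Variable R : realType.
Local Notation C := (C R).

Lemma einf_ge1 (S : set R) : (forall a, S a -> (1 <= a)%R) ->
  1 <= ereal_inf [set l%:E | l in S].
Proof. by move=> h; apply/ereal_infP => _ [l Sl <-]; rewrite lee_fin h. Qed.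

Lemma prod_approx (SA SB : set R) (q : R) :
  (forall a, SA a -> (1 <= a)%R) -> (forall b, SB b -> (1 <= b)%R) ->
  ereal_inf [set l%:E | l in SA] * ereal_inf [set l%:E | l in SB] < q%:E ->
  exists a b, [/\ SA a, SB b & (a * b < q)%R].
Proof.
move=> hA hB; have xA := einf_ge1 hA; have xB := einf_ge1 hB.
case Ex : (ereal_inf [set l%:E | l in SA]) xA => [a0| |] xA; last by [].
  case Ey : (ereal_inf [set l%:E | l in SB]) xB => [b0| |] xB; last by [].
    rewrite -EFinM lte_fin => hq.
    have b0p : (0 < b0)%R by rewrite (lt_le_trans ltr01).
    have : ereal_inf [set l%:E | l in SA] < (q / b0)%:E.
      by rewrite Ex lte_fin ltr_pdivlMr.
    case/ereal_inf_lt => _ [a Sa <-]; rewrite lte_fin ltr_pdivlMr // => ha.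
    have ap : (0 < a)%R by rewrite (lt_le_trans ltr01) ?hA.
    have : ereal_inf [set l%:E | l in SB] < (q / a)%:E.
      by rewrite Ey lte_fin ltr_pdivlMr // mulrC.
    case/ereal_inf_lt => _ [b Sb <-]; rewrite lte_fin ltr_pdivlMr // => hb.
    by exists a, b; rewrite mulrC.
  by rewrite gt0_muley // (lt_le_trans _ xA) // lte_fin.
by rewrite gt0_mulye // (lt_le_trans _ xB) // lte_fin.
Qed.

End S11.

Lemma key_bound (R : realType) n m (Fin : set 'M[C R]_n) (Fout : set 'M[C R]_m)
  (rho : 'M[C R]_n) (phi : 'cV[C R]_m) (tau : 'M[C R]_m) (f : R) s a b :
  free_set Fin -> free_set Fout -> density rho -> unit_vec phi ->
  prob_trans Fin Fout rho tau ->
  (forall s', Fout s' -> reC (qf s' phi) <= f) ->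
  Fin s -> lemx rho (toC a *: s) -> lemx s (toC b *: rho) ->
  1 - f <= a * b * (1 - reC (qf tau phi)).
Proof.
move=> fFin fFout dr uphi pt fub Fs ha hb.
have ds : density s by case: fFin => _ [_]; apply.
have a1 := lemx_ge1 dr ds ha; have b1 := lemx_ge1 ds dr hb.
have abp : 0 < a * b by apply: mulr_gt0; lra.
suff : reC (qf tau phi) <= 1 - (1 - f) / (a * b).
  move=> h; have : (1 - f) / (a * b) <= 1 - reC (qf tau phi) by lra.
  by rewrite ler_pdivrMr // mulrC.
apply: closure_le pt => _ [E [rngE t0] <-].
have [s' [Fs' h]] := core_ineq fFout uphi Fs ha hb rngE t0.
have := fub s' Fs'.
set x := reC (qf s' phi) in h *; set cE := reC _ in h *.
move=> hx.
have : (1 - f) / (a * b) <= 1 - cE by rewrite ler_pdivrMr // mulrC; lra.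
lra.
Qed.

Lemma Rmax_ge1 (R : realType) n (X Y : 'M[C R]_n) : density X -> density Y -> (1 <= Rmax X Y)%E.
Proof. by move=> dX dY; apply: einf_ge1 => l; apply: lemx_ge1. Qed.

Unset Implicit Arguments.

Theorem lemma4 (R : realType) (n m : nat)
  (Fin : set 'M[C R]_n) (Fout : set 'M[C R]_m)
  (rho : 'M[C R]_n) (phi : 'cV[C R]_m) (tau : 'M[C R]_m) (eps : R) :
  free_set Fin -> free_set Fout ->
  density rho ->
  unit_vec phi -> ~ Fout (pure_proj phi) ->
  density tau ->
  prob_trans Fin Fout rho tau ->
  1 - eps <= fidelity tau (pure_proj phi) ->
  ((1%:E - FF Fout phi) * (OmegaF Fin rho)^-1 <= eps%:E)%E /\
  ((lmin rho)%:E * (1%:E - FF Fout phi) * (RF Fin rho)^-1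
     <= (1%:E - FF Fout phi) * (OmegaF Fin rho)^-1)%E.
Proof.
move=> fFin fFout dr uphi _ dtau pt hfid.
have [ptau trtau] := dtau.
set c := reC (qf tau phi).
have c0 : 0 <= c by have := reC_le ((psdE tau).1 ptau phi).
have c1 : c <= 1 by have := reC_le (qf_le_tr uphi ptau); rewrite trtau.
have hc : 1 - c <= eps by have := fid_le uphi ptau; rewrite -/c; lra.
have [[s0 Fs0]|nF] := pselect (exists s, Fin s); last first.
  have F0 : Fin = set0 by apply/seteqP; split => // s Fs; apply: nF; exists s.
  rewrite /OmegaF /RF F0 !image_set0 ereal_inf0 invey !mule0; split => //.
  by rewrite lee_fin; lra.
have [y [[E [rngE t0] ey] _]] := pt _ (nbhsx_ballx tau (1 : C R) ltr01).
have [s1 [p [Fs1 _]]] := rngE.2.2 s0 Fs0.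
have FFle : (FF Fout phi <= 1%:E)%E.
  apply/ereal_supP => _ [s Fs <-]; rewrite lee_fin.
  have [ds1 ds2] := fFout.2.2 s Fs.
  by have := reC_le (qf_le_tr uphi ds1); rewrite ds2.
have FFge : ((reC (qf s1 phi))%:E <= FF Fout phi)%E.
  by apply: ereal_sup_ubound; exists s1.
case EF : (FF Fout phi) FFle FFge => [f| |] FFle FFge; [|by []|by []].
have fub : forall s', Fout s' -> reC (qf s' phi) <= f.
  by move=> s' Fs'; rewrite -lee_fin -EF; apply: ereal_sup_ubound; exists s'.
have f1 : f <= 1 by rewrite -lee_fin.
rewrite -EFinB.
have one11 : (1%E : \bar R) = (1 * 1)%E by rewrite mule1.
have Om1 : (1 <= OmegaF Fin rho)%E.
  apply/ereal_infP => _ [s Fs <-]; have ds := fFin.2.2 s Fs.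
  by rewrite one11; apply: lee_pmul => //; apply: Rmax_ge1.
have RF1 : (1 <= RF Fin rho)%E.
  by apply/ereal_infP => _ [s Fs <-]; have ds := fFin.2.2 s Fs; apply: Rmax_ge1.
split.
  case EO : (OmegaF Fin rho) Om1 => [w| |] Om1; last by [].
    have w1 : 1 <= w by rewrite -lee_fin.
    have wp : 0 < w by lra.
    rewrite inver gt_eqF // -EFinM lee_fin.
    suff key : 1 - f <= w * (1 - c).
      have : (1 - f) * w^-1 <= 1 - c by rewrite ler_pdivrMr // mulrC.
      lra.
    rewrite leNgt; apply/negP => hlt.
    set g := 1 - f - w * (1 - c).
    have g0 : 0 < g by rewrite /g; lra.
    set k := (1 - c) / (3 - 2 * c).
    have k1 : k < 1 by rewrite /k ltr_pdivrMr; lra.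
    have k0 : 0 <= k by rewrite /k divr_ge0 //; lra.
    set q := w + g * (1 / (3 - 2 * c)).
    have hq2 : q * (1 - c) < 1 - f.
      have -> : q * (1 - c) = w * (1 - c) + g * k by rewrite /q /k; field; lra.
      have : g * k < g by rewrite -{2}(mulr1 g) ltr_pM2l.
      rewrite /g; lra.
    have : (OmegaF Fin rho < q%:E)%E.
      rewrite EO lte_fin /q ltrDl; apply: mulr_gt0 => //; rewrite divr_gt0 //; lra.
    case/ereal_inf_lt => _ [s Fs <-] hs.
    have ds := fFin.2.2 s Fs.
    have [a [b [ha hb hab]]] := @prod_approx R (fun l => lemx rho (toC l *: s)) (fun l => lemx s (toC l *: rho)) q (fun l h => lemx_ge1 dr ds h) (fun l h => lemx_ge1 ds dr h) hs.
    have := key_bound fFin fFout dr uphi pt fub Fs ha hb; rewrite -/c => hk.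
    have : a * b * (1 - c) <= q * (1 - c) by apply: ler_wpM2r; lra.
    lra.
  by rewrite invey mule0 lee_fin; lra.
have RFi : (0 <= (RF Fin rho)^-1)%E by rewrite inve_ge0 (le_trans _ RF1).
have Omi : (0 <= (OmegaF Fin rho)^-1)%E by rewrite inve_ge0 (le_trans _ Om1).
have f0 : (0 <= (1 - f)%:E)%E by rewrite lee_fin; lra.
set lam := lmin rho.
have [l0|lp] := lerP lam 0.
  apply: (@le_trans _ _ 0%E); last exact: mule_ge0.
  apply: mule_le0_ge0 => //; rewrite -EFinM lee_fin; apply: mulr_le0_ge0 => //; lra.
have hs : forall s, Fin s -> (Rmax s rho <= (lam^-1)%:E)%E.
  move=> s Fs; have ds := fFin.2.2 s Fs.
  apply: ereal_inf_lbound; exists lam^-1 => //.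
  have e : toC lam^-1 *: rho - s = toC lam^-1 *: (rho - toC lam *: 1%:M) + (1%:M - s).
    by rewrite scalerBr scalerA -toCM mulVf ?gt_eqF // scale1r addrA subrK.
  have : psd (toC lam^-1 *: (rho - toC lam *: 1%:M) + (1%:M - s)).
    apply: psdD; last exact: dens_le1.
    by apply: psdZ; [rewrite toC_ge0 invr_ge0 ltW | exact: (lmin_psd dr.1)].
  by rewrite -e => h; exact: h.
case ER : (RF Fin rho) RF1 => [r| |] RF1; last by [].
  have r1 : 1 <= r by rewrite -lee_fin.
  have lOm : (lam%:E * OmegaF Fin rho <= r%:E)%E.
    rewrite -ER; apply/ereal_infP => _ [s Fs <-].
    have ds := fFin.2.2 s Fs.
    have h1 : (OmegaF Fin rho <= Rmax rho s * Rmax s rho)%E.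
      by apply: ereal_inf_lbound; exists s.
    have h2 : (Rmax rho s * Rmax s rho <= Rmax rho s * (lam^-1)%:E)%E.
      by apply: lee_wpmul2l; [apply: le_trans (Rmax_ge1 dr ds) | exact: hs].
    have h3 := lee_wpmul2l (ltW lp : (0 <= lam%:E)%E) (le_trans h1 h2).
    apply: le_trans h3 _.
    by rewrite muleCA -EFinM mulfV ?gt_eqF // mule1.
  case EO : (OmegaF Fin rho) Om1 lOm => [w| |] Om1 lOm; last by [].
    have w1 : 1 <= w by rewrite -lee_fin.
    rewrite -EFinM lee_fin in lOm.
    rewrite !inver !gt_eqF ?(lt_le_trans ltr01) // -!EFinM lee_fin.
    have h : lam * r^-1 <= w^-1.
      rewrite ler_pdivrMr ?(lt_le_trans ltr01) // mulrC ler_pdivlMr ?(lt_le_trans ltr01) //.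
    rewrite mulrAC mulrC; apply: ler_wpM2l => //; lra.
  by rewrite gt0_muley ?lte_fin in lOm.
by rewrite invey mule0; apply: mule_ge0.
Qed.
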